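(* Let $\bar y\in[0,1]^M$ with $\sum_{j=1}^M \bar y_j = p$, and for each $i\in[N]$ let $\tilde k_i$ be as defined in the context. Then for every $i\in[N]$ the vector $\bar v_i=(\bar v_i^1,\dots,\bar v_i^{K_i})$ given by $$\bar v_i^k=\begin{cases} D_i^{\tilde k_i+1}-D_i^k & \text{if } k\le \tilde k_i,\\ 0 & \text{otherwise},\end{cases}\qquad k\in[K_i],$$ is an optimal solution of $(DSP_i(\bar y))$, and its objective value equals the optimal value of $(SP_i(\bar y))$.
   Context: Data: clients $i\in[N]$, candidate sites $j\in[M]$ (where $[n]=\{1,\dots,n\}$), nonnegative distances $d_{ij}$, and an integer $p$ with $1\le p\le M$. For each client $i$, let $K_i$ be the number of distinct values among $\{d_{ij}: j\in[M]\}$ and let $D_i^1<\dots<D_i^{K_i}$ be these distinct values sorted increasingly. For $\bar y\in[0,1]^M$, the sub-problem $(SP_i(\bar y))$ is the linear program in variables $z_i^1,\dots,z_i^{K_i}$: minimize $D_i^1+\sum_{k=1}^{K_i-1}(D_i^{k+1}-D_i^k)z_i^k$ subject to $z_i^1\ge 1-\sum_{j:d_{ij}=D_i^1}\bar y_j$; $z_i^k-z_i^{k-1}\ge -\sum_{j:d_{ij}=D_i^k}\bar y_j$ for $k=2,\dots,K_i$; $z_i^k\ge 0$ for $k\in[K_i]$. Its dual $(DSP_i(\bar y))$ is the linear program in variables $v_i^1,\dots,v_i^{K_i}$: maximize $D_i^1+v_i^1\big(1-\sum_{j:d_{ij}=D_i^1}\bar y_j\big)-\sum_{k=2}^{K_i}v_i^k\sum_{j:d_{ij}=D_i^k}\bar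 y_j$ subject to $v_i^k-v_i^{k+1}\le D_i^{k+1}-D_i^k$ for $k\in[K_i-1]$; $v_i^k\ge 0$ for $k\in[K_i]$. Index $\tilde k_i$: $\tilde k_i=0$ if $\sum_{j:d_{ij}=D_i^1}\bar y_j\ge 1$; otherwise $\tilde k_i=\max\{k\in[K_i]: 1-\sum_{j:d_{ij}\le D_i^k}\bar y_j>0\}$. *)

(* Defs.v *)
From HB Require Import structures.
From mathcomp Require Import all_boot all_order all_algebra.
Set Implicit Arguments. Unset Strict Implicit. Unset Printing Implicit Defensive.
Import Order.TTheory GRing.Theory Num.Theory.
Local Open Scope ring_scope.

Section Defs.
Variables (R : realFieldType) (N M : nat) (d : 'I_N -> 'I_M -> R).

Definition Dseq (i : 'I_N) : seq R :=
  sort <=%R (undup [seq d i j | j <- enum 'I_M]).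

Definition Kc (i : 'I_N) : nat := size (Dseq i).

(* D_i^k, 1-based: D i 1 < ... < D i (Kc i). *)
Definition D (i : 'I_N) (k : nat) : R := nth 0 (Dseq i) k.-1.

Definition ysumEq (y : 'I_M -> R) (i : 'I_N) (k : nat) : R :=
  \sum_(j < M | d i j == D i k) y j.

Definition ysumLe (y : 'I_M -> R) (i : 'I_N) (k : nat) : R :=
  \sum_(j < M | d i j <= D i k) y j.

(* Objective and feasibility of (SP_i(y)); variables z_i^k stored as z k, k in [K_i]. *)
Definition SP_obj (i : 'I_N) (z : nat -> R) : R :=
  D i 1 + \sum_(1 <= k < Kc i) (D i k.+1 - D i k) * z k.

Definition SP_feasible (y : 'I_M -> R) (i : 'I_N) (z : nat -> R) : Prop :=
  [/\ z 1 >= 1 - ysumEq y i 1,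
      (forall k, (2 <= k <= Kc i)%N -> z k - z k.-1 >= - ysumEq y i k) &
      (forall k, (1 <= k <= Kc i)%N -> z k >= 0)].

Definition DSP_obj (y : 'I_M -> R) (i : 'I_N) (v : nat -> R) : R :=
  D i 1 + v 1 * (1 - ysumEq y i 1) - \sum_(2 <= k < (Kc i).+1) v k * ysumEq y i k.

Definition DSP_feasible (i : 'I_N) (v : nat -> R) : Prop :=
  (forall k, (1 <= k < Kc i)%N -> v k - v k.+1 <= D i k.+1 - D i k) /\
  (forall k, (1 <= k <= Kc i)%N -> v k >= 0).

Definition DSP_optimal (y : 'I_M -> R) (i : 'I_N) (v : nat -> R) : Prop :=
  DSP_feasible i v /\
  forall w, DSP_feasible i w -> DSP_obj y i w <= DSP_obj y i v.

Definition SP_optval (y : 'I_M -> R) (i : 'I_N) (val : R) : Prop :=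
  (exists z, SP_feasible y i z /\ SP_obj i z = val) /\
  forall z, SP_feasible y i z -> val <= SP_obj i z.

Definition ktilde (y : 'I_M -> R) (i : 'I_N) : nat :=
  if ysumEq y i 1 >= 1 then 0%N
  else \max_(1 <= k < (Kc i).+1 | 0 < 1 - ysumLe y i k) k.

Definition vbar (y : 'I_M -> R) (i : 'I_N) (k : nat) : R :=
  if (k <= ktilde y i)%N then D i (ktilde y i).+1 - D i k else 0.

End Defs.

(* Main.v *)
Require Import Defs.
From HB Require Import structures.
From mathcomp Require Import all_boot all_order all_algebra.
From mathcomp Require Import ring lra zify.
Import Order.TTheory GRing.Theory Num.Theory.
Local Open Scope ring_scope.

Lemma gap_id (R : realFieldType) (Df s w z : nat -> R) (n : nat) :
 (Df 1%N + \sum_(1 <= k < n.+1) (Df k.+1 - Df k) * z k)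
   - (Df 1%N + w 1%N * (1 - s 1%N) - \sum_(2 <= k < n.+2) w k * s k)
 = \sum_(1 <= k < n.+1) (Df k.+1 - Df k - (w k - w k.+1)) * z k - w n.+1 * z n.+1
   + w 1%N * (z 1%N - (1 - s 1%N)) + \sum_(2 <= k < n.+2) w k * (z k - z k.-1 + s k).
Proof.
elim: n => [|n IH].
  by rewrite !big_geq //; ring.
rewrite !(big_nat_recr n.+1) // !(big_nat_recr n.+2) //=.
move: IH.
set a := \sum_(1 <= k < n.+1) _.
set b := \sum_(2 <= k < n.+2) _.
set e := \sum_(1 <= k < n.+1) _.
set f := \sum_(2 <= k < n.+2) _.
move=> IH. lra.
Qed.

Theorem proposition1 (R : realFieldType) (N M : nat) (d : 'I_N -> 'I_M -> R)
    (p : nat) (y : 'I_M -> R) :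
  (forall i j, 0 <= d i j) ->
  (1 <= p <= M)%N ->
  (forall j, 0 <= y j <= 1) ->
  \sum_(j < M) y j = p%:R ->
  forall i : 'I_N,
    DSP_optimal d y i (vbar d y i) /\
    SP_optval d y i (DSP_obj d y i (vbar d y i)).
Proof.
move=> d_ge0 /andP[p1 pM] y01 ysum i.
set K := Kc d i.
have y0 : forall j, 0 <= y j by move=> j; case/andP: (y01 j).
have memD : forall j, d i j \in Dseq d i.
  move=> j; rewrite /Dseq mem_sort mem_undup; apply: map_f; exact: mem_enum.
have M0 : (0 < M)%N by apply: leq_trans pM.
have K1 : (1 <= K)%N.
  have := memD (Ordinal M0); rewrite /K /Kc; by case: (Dseq d i).
have Dmem : forall j, exists2 m, (1 <= m <= K)%N & d i j = D d i m.
  move=> j; exists (index (d i j) (Dseq d i)).+1.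
    by rewrite /= index_mem memD.
  by rewrite /D /= nth_index.
have Dsort : sorted <%R (Dseq d i).
  rewrite lt_sorted_uniq_le sort_uniq undup_uniq /=; apply: sort_sorted; exact: le_total.
have Dlt : forall a b, (1 <= a)%N -> (a < b)%N -> (b <= K)%N -> D d i a < D d i b.
  move=> a b a1 ab bK; rewrite /D.
  apply: (sorted_ltn_nth lt_trans) => //; rewrite ?inE -/(Kc d i) -/K; lia.
have Dle_eq : forall a b, (1 <= a <= K)%N -> (1 <= b <= K)%N ->
    (D d i a <= D d i b) = (a <= b)%N.
  move=> a b /andP[a1 aK] /andP[b1 bK].
  case: (ltngtP a b) => [ab|ba|->].
  - by apply: ltW; apply: Dlt.
  - by apply/negbTE; rewrite -ltNge; apply: Dlt.
  - exact: lexx.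
have Deq : forall a b, (1 <= a <= K)%N -> (1 <= b <= K)%N ->
    (D d i a == D d i b) = (a == b)%N.
  by move=> a b ha hb; rewrite eq_le !Dle_eq // eqn_leq.
have Dmono : forall a b, (1 <= a)%N -> (a <= b)%N -> (b <= K)%N -> D d i a <= D d i b.
  by move=> a b a1 ab bK; rewrite Dle_eq // ?ab; apply/andP; split; lia.
have S1 : ysumLe d y i 1 = ysumEq d y i 1.
  rewrite /ysumLe /ysumEq; apply: eq_bigl => j; have [m mK ->] := Dmem j.
  rewrite Dle_eq ?Deq //.
  by case/andP: mK => m1 _; rewrite eqn_leq m1 andbT.
have Srec : forall k, (2 <= k <= K)%N ->
    ysumLe d y i k = ysumLe d y i k.-1 + ysumEq d y i k.
  move=> k /andP[k2 kK]; rewrite /ysumLe /ysumEq (bigID (fun j => d i j == D d i k)) /= addrC.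
  congr (_ + _).
  - apply: eq_bigl => j; have [m mK ->] := Dmem j.
    rewrite !Dle_eq ?Deq //; try (apply/andP; split; lia).
    rewrite andbC -ltn_neqAle.
    by case: k k2 kK => // k' _ _; rewrite ltnS.
  - apply: eq_bigl => j; case: eqP => [->|]; by rewrite ?lexx ?andbF ?andbT.
have SK : ysumLe d y i K = p%:R.
  rewrite /ysumLe -ysum; apply: eq_bigl => j; have [m mK ->] := Dmem j.
  rewrite Dle_eq //; first by case/andP: mK.
  by apply/andP; split; lia.
have Smono : forall a b, (a <= b)%N -> (b <= K)%N -> (1 <= a)%N ->
    ysumLe d y i a <= ysumLe d y i b.
  move=> a b ab bK a1; rewrite /ysumLe [X in _ <= X]big_mkcond [X in X <= _]big_mkcond /=.
  apply: ler_sum => j _.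
  case: ifP => h1; case: ifP => h2 //.
  by move: h2; rewrite (le_trans h1) // Dmono.
have s_ge0 : forall k, 0 <= ysumEq d y i k.
  by move=> k; apply: sumr_ge0 => j _.
set kt := ktilde d y i.
have kt_spec : [/\ (kt < K)%N, (forall k, (1 <= k <= kt)%N -> ysumLe d y i k < 1),
    1 <= ysumLe d y i kt.+1 & ((kt == 0)%N -> 1 <= ysumEq d y i 1)].
  have p1R : 1 <= p%:R :> R by rewrite ler1n.
  rewrite /kt /ktilde; case: ifP => hs.
    split => //; first by move=> k; lia.
    by rewrite S1.
  have hs' : ysumEq d y i 1 < 1 by rewrite ltNge hs.
  set mx := \max_(1 <= k < _ | _) k.
  have ub : forall k, (1 <= k <= K)%N -> 0 < 1 - ysumLe d y i k -> (k <= mx)%N.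
    move=> k hk hP; rewrite /mx -/K.
    have := @leq_bigmax_seq nat (index_iota 1 K.+1) (fun k => 0 < 1 - ysumLe d y i k) (fun k => k) k.
    rewrite mem_index_iota; apply => //; lia.
  have inset : mx = 0%N \/ ((1 <= mx <= K)%N /\ 0 < 1 - ysumLe d y i mx).
    rewrite /mx -/K big_seq_cond.
    apply: (big_ind (fun x => x = 0%N \/ ((1 <= x <= K)%N /\ 0 < 1 - ysumLe d y i x))).
    - by left.
    - move=> x1 x2 h1 h2; by rewrite /maxn; case: ltnP.
    - move=> k /andP[]; rewrite mem_index_iota => hk hP; right; split => //; lia.
  have mx1 : (1 <= mx)%N.
    by apply: (ub 1%N); [lia | rewrite S1; lra].
  case: inset => [mx0|[hmx hPmx]]; first by rewrite mx0 in mx1.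
  have mxK : (mx < K)%N.
    rewrite ltn_neqAle; case/andP: hmx => _ ->; rewrite andbT.
    apply/eqP => eK; move: hPmx; rewrite eK SK; have : 1 <= p%:R :> R by rewrite ler1n.
    lra.
  split => //.
  - move=> k /andP[k1 kmx]; have := Smono k mx kmx (ltnW mxK) k1; lra.
  - rewrite leNgt; apply/negP => hlt.
    suff : (mx.+1 <= mx)%N by rewrite ltnn.
    by apply: ub; [lia | lra].
  - by move/eqP => e; rewrite e in mx1.
case: kt_spec => ktK Slt1 Sge1 kt0.
have [n Kn] : exists n, K = n.+1 by exists K.-1; lia.
have gap : forall w z, SP_obj d i z - DSP_obj d y i w =
    \sum_(1 <= k < K) (D d i k.+1 - D d i k - (w k - w k.+1)) * z k - w K * z K
   + w 1%N * (z 1%N - (1 - ysumEq d y i 1)) + \sum_(2 <= k < K.+1) w k * (z k - z k.-1 + ysumEq d y i k).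
  move=> w z; rewrite /SP_obj /DSP_obj -/K Kn; exact: gap_id.
have gap_ge0 : forall w z, DSP_feasible d i w -> SP_feasible d y i z -> w K * z K = 0 ->
    0 <= SP_obj d i z - DSP_obj d y i w.
  move=> w z [W1 W2] [Z1 Z2 Z3] wz; rewrite gap wz subr0.
  apply: addr_ge0; first apply: addr_ge0.
  - rewrite big_seq; apply: sumr_ge0 => k; rewrite mem_index_iota => hk.
    apply: mulr_ge0; first by rewrite subr_ge0; apply: W1.
    by apply: Z3; lia.
  - apply: mulr_ge0; first by apply: W2; lia.
    by rewrite subr_ge0.
  - rewrite big_seq; apply: sumr_ge0 => k; rewrite mem_index_iota => hk.
    apply: mulr_ge0; first by apply: W2; lia.
    have := Z2 k hk; lra.
pose zbar k := if (k <= kt)%N then 1 - ysumLe d y i k else 0.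
have zK : zbar K = 0 by rewrite /zbar ifN // -ltnNge.
have vK : vbar d y i K = 0 by rewrite /vbar -/kt ifN // -ltnNge.
have vfeas : DSP_feasible d i (vbar d y i).
  split.
  - move=> k hk; rewrite /vbar -/kt.
    case: (leqP k kt) => h1; case: (leqP k.+1 kt) => h2.
    + lra.
    + have -> : k = kt by lia.
      lra.
    + lia.
    + have := Dlt k k.+1; rewrite subr0 subr_ge0 => H; apply: ltW; apply: H; lia.
  - move=> k hk; rewrite /vbar -/kt; case: leqP => h //.
    rewrite subr_ge0; apply: Dmono; lia.
have zfeas : SP_feasible d y i zbar.
  split.
  - rewrite /zbar; case: leqP => h; last by rewrite S1.
    have : (kt == 0)%N by lia.
    move/kt0; lra.
  - move=> k hk; rewrite /zbar.
    have Sr := Srec k hk; have sk := s_ge0 k.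
    case: (leqP k kt) => h1.
      rewrite ifT; last lia.
      lra.
    case: (leqP k.-1 kt) => h2.
      have ek : k = kt.+1 by lia.
      move: Sr; rewrite ek /= => Sr; have := Sge1; lra.
    lra.
  - move=> k hk; rewrite /zbar; case: leqP => h //.
    have := Slt1 k; rewrite subr_ge0 => H; apply: ltW; apply: H; lia.
have eqobj : SP_obj d i zbar = DSP_obj d y i (vbar d y i).
  apply/eqP; rewrite -subr_eq0; apply/eqP; rewrite gap zK mulr0 subr0.
  rewrite big1_seq; last first.
    move=> k /andP[_]; rewrite mem_index_iota => hk.
    rewrite /zbar; case: (leqP k kt) => h1; last by rewrite mulr0.
    have ev1 : vbar d y i k = D d i kt.+1 - D d i k by rewrite /vbar -/kt ifT.
    have ev2 : vbar d y i k.+1 = D d i kt.+1 - D d i k.+1.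
      rewrite /vbar -/kt; case: leqP => h2 //.
      have -> : k.+1 = kt.+1 by lia.
      by rewrite subrr.
    rewrite ev1 ev2.
    have -> : D d i k.+1 - D d i k - (D d i kt.+1 - D d i k - (D d i kt.+1 - D d i k.+1)) = 0 by ring.
    by rewrite mul0r.
  rewrite [X in _ + X]big1_seq; last first.
    move=> k /andP[_]; rewrite mem_index_iota => hk.
    rewrite /zbar; case: (leqP k kt) => h1; last by rewrite /vbar -/kt ifN ?mul0r // -ltnNge.
    rewrite ifT; last lia.
    rewrite (Srec k); last lia.
    have -> : 1 - (ysumLe d y i k.-1 + ysumEq d y i k) - (1 - ysumLe d y i k.-1) + ysumEq d y i k = 0 by ring.
    by rewrite mulr0.
  rewrite /zbar; case: (leqP 1 kt) => h1.
    by rewrite S1 subrr mulr0 !add0r.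
  by rewrite /vbar -/kt ifN ?mul0r ?addr0 // -ltnNge.
split.
  split => // w wf.
  have := gap_ge0 w zbar wf zfeas; rewrite zK mulr0 subr_ge0 eqobj; exact.
split; first by exists zbar.
move=> z zf.
have := gap_ge0 (vbar d y i) z vfeas zf; rewrite vK mul0r subr_ge0; exact.
Qed.
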